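(* Let $S$ be a $\Gamma$-semiring with zero having a left unity and a right unity, and let $L$ be its left operator semiring. Then the map $\sigma\mapsto\sigma^{+'}$ is an inclusion preserving bijection from the set $FI(S)$ of fuzzy ideals of $S$ onto the set $FI(L)$ of fuzzy ideals of $L$, and it is an isomorphism of the lattices $(FI(S),\oplus,\cap)$ and $(FI(L),\oplus,\cap)$. Likewise, $\sigma\mapsto\sigma^{+'}$ gives a lattice isomorphism, via an inclusion preserving bijection, between the fuzzy right ideals of $S$ and the fuzzy right ideals of $L$.
   Context: A $\Gamma$-semiring: $S$ and $\Gamma$ are additive commutative semigroups with a map $S\times\Gamma\times S\to S$, $(a,\alpha,b)\mapsto a\alpha b$, such that $(a+b)\alpha c=a\alpha c+b\alpha c$, $a\alpha(b+c)=a\alpha b+a\alpha c$, $a(\alpha+\beta)b=a\alpha b+a\beta b$, $a\alpha(b\beta c)=(a\alpha b)\beta c$. With zero: $(S,+)$, $(\Gamma,+)$ are monoids, $0_S\alpha x=0_S=x\alpha0_S$, $x0_\Gamma y=0_S$. Left operator semiring $L$: $F$ is the free additive commutative semigroup on $S\times\Gamma$; $\sum_i(x_i,\alpha_i)\,\rho\,\sum_j(y_j,\beta_j)$ iff $\sum_ix_i\alpha_ia=\sum_jy_j\beta_ja$ for all $a\in S$; $L=F/\rho$, classes written $\sum_i[x_i,\alpha_i]$, multiplication $(\sum_i[x_i,\alpha_i])(\sum_j[y_j,\beta_j])=\sum_{i,j}[x_i\alpha_iy_j,\beta_j]$; its zero is $[0,\gamma]$. A left unity of $S$ is $\sum_i[e_i,\delta_i]\in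 L$ with $\sum_ie_i\delta_ia=a$ for all $a$; a right unity is a finite family $\gamma_j\in\Gamma,f_j\in S$ with $\sum_ja\gamma_jf_j=a$ for all $a$. Fuzzy subset: map into $[0,1]$. A fuzzy right ideal of $S$: fuzzy subset $\mu$, not identically $0$, with $\mu(x+y)\ge\min[\mu(x),\mu(y)]$ and $\mu(x\gamma y)\ge\mu(x)$ for all $x,y\in S,\gamma\in\Gamma$; a fuzzy left ideal: same with $\mu(x\gamma y)\ge\mu(y)$; a fuzzy ideal: both. For the semiring $L$ analogously with $\mu(pq)\ge\mu(p)$ (right), $\mu(pq)\ge\mu(q)$ (left). Convention: all these fuzzy (left/right) ideals satisfy $\mu(0)=1$. For a fuzzy subset $\sigma$ of $S$: $\sigma^{+'}(\sum_i[x_i,\alpha_i])=\inf_{s\in S}\sigma(\sum_ix_i\alpha_is)$. $(\mu_1\oplus\mu_2)(x)=\sup\{\min[\mu_1(u),\mu_2(v)]:x=u+v\}$; $\cap$ is pointwise minimum; inclusion is pointwise $\le$. *)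

(* Defs.v *)
From HB Require Import structures.
From mathcomp Require Import all_boot all_order all_algebra.
From mathcomp Require Import all_classical all_reals.
Set Implicit Arguments. Unset Strict Implicit. Unset Printing Implicit Defensive.
Import Order.TTheory GRing.Theory Num.Theory.
Local Open Scope ring_scope.
Local Open Scope classical_set_scope.

Section GammaSemiring.
Variables (S G : nmodType) (op : S -> G -> S -> S).

Definition gamma_semiring_with_zero : Prop :=
  [/\ (forall a b c al, op (a + b) al c = op a al c + op b al c),
      (forall a b c al, op a al (b + c) = op a al b + op a al c),
      (forall a b al be, op a (al + be) b = op a al b + op a be b),
      (forall a b c al be, op a al (op b be c) = op (op a al b) be c)
    & (forall x al y, [/\ op 0 al x = 0, op x al 0 = 0 & op x 0 y = 0])].

(* The function a |-> sum_i x_i alpha_i a of a formal sum sum_i (x_i, alpha_i);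
   two formal sums are rho-related iff these functions coincide, so the
   rho-class of a formal sum is faithfully represented by this function. *)
Definition cls (l : seq (S * G)) : S -> S :=
  fun a => \sum_(p <- l) op p.1 p.2 a.

(* The left operator semiring L = F / rho; F = nonempty formal sums. *)
Definition Lop : Type :=
  {f : S -> S | exists l : seq (S * G), l <> [::] /\ f = cls l}.

Definition Lval (p : Lop) : S -> S := proj1_sig p.

Lemma Lzero_proof : exists l : seq (S * G), l <> [::] /\ cls [:: (0, 0)] = cls l.
Proof. by exists [:: (0, 0)]. Qed.

Definition Lzero : Lop := exist _ (cls [:: (0, 0)]) Lzero_proof.

Definition Ladd_rel (p q r : Lop) : Prop :=
  exists lp lq, Lval p = cls lp /\ Lval q = cls lq /\ Lval r = cls (lp ++ lq).

Definition lmul (lp lq : seq (S * G)) : seq (S * G) :=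
  [seq (op p.1 p.2 q.1, q.2) | p <- lp, q <- lq].

Definition Lmul_rel (p q r : Lop) : Prop :=
  exists lp lq, Lval p = cls lp /\ Lval q = cls lq /\ Lval r = cls (lmul lp lq).

Definition has_left_unity : Prop :=
  exists l : seq (S * G), l <> [::] /\ forall a, cls l a = a.

Definition has_right_unity : Prop :=
  exists l : seq (G * S), forall a, \sum_(p <- l) op a p.1 p.2 = a.

Variable R : realType.

Definition fuzzy {T : Type} (mu : T -> R) : Prop := forall x, 0 <= mu x <= 1.

Definition fuzzy_right_ideal (mu : S -> R) : Prop :=
  [/\ fuzzy mu, (exists x, mu x <> 0), mu 0 = 1,
      (forall x y, Num.min (mu x) (mu y) <= mu (x + y))
    & (forall x g y, mu x <= mu (op x g y))].

Definition fuzzy_left_ideal (mu : S -> R) : Prop :=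
  [/\ fuzzy mu, (exists x, mu x <> 0), mu 0 = 1,
      (forall x y, Num.min (mu x) (mu y) <= mu (x + y))
    & (forall x g y, mu y <= mu (op x g y))].

Definition fuzzy_ideal (mu : S -> R) : Prop :=
  fuzzy_right_ideal mu /\ fuzzy_left_ideal mu.

Definition Lfuzzy_right_ideal (mu : Lop -> R) : Prop :=
  [/\ fuzzy mu, (exists x, mu x <> 0), mu Lzero = 1,
      (forall x y z, Ladd_rel x y z -> Num.min (mu x) (mu y) <= mu z)
    & (forall p q r, Lmul_rel p q r -> mu p <= mu r)].

Definition Lfuzzy_left_ideal (mu : Lop -> R) : Prop :=
  [/\ fuzzy mu, (exists x, mu x <> 0), mu Lzero = 1,
      (forall x y z, Ladd_rel x y z -> Num.min (mu x) (mu y) <= mu z)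
    & (forall p q r, Lmul_rel p q r -> mu q <= mu r)].

Definition Lfuzzy_ideal (mu : Lop -> R) : Prop :=
  Lfuzzy_right_ideal mu /\ Lfuzzy_left_ideal mu.

Definition plus_prime (sigma : S -> R) : Lop -> R :=
  fun p => inf [set sigma (Lval p s) | s in [set: S]].

Definition fsum (m1 m2 : S -> R) : S -> R :=
  fun x => sup [set r | exists u v, x = u + v /\ r = Num.min (m1 u) (m2 v)].

Definition Lfsum (m1 m2 : Lop -> R) : Lop -> R :=
  fun x => sup [set r | exists u v, Ladd_rel u v x /\ r = Num.min (m1 u) (m2 v)].

End GammaSemiring.

Definition fcap {T : Type} {R : realType} (m1 m2 : T -> R) : T -> R :=
  fun x => Num.min (m1 x) (m2 x).

Definition fincl {T : Type} {R : realType} (m1 m2 : T -> R) : Prop :=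
  forall x, m1 x <= m2 x.

Arguments plus_prime [S G] op [R] sigma _.

(* Main.v *)
Require Import Defs.
From mathcomp Require Import all_boot all_order all_algebra.
From mathcomp Require Import all_classical all_reals.
Set Implicit Arguments. Unset Strict Implicit. Unset Printing Implicit Defensive.
Import Order.TTheory GRing.Theory Num.Theory.
Local Open Scope ring_scope.
Local Open Scope classical_set_scope.


Section Infra.
Variables (S G : nmodType) (op : S -> G -> S -> S).
Hypothesis Hgs : gamma_semiring_with_zero op.

Lemma opDl a b c al : op (a + b) al c = op a al c + op b al c.
Proof. by case: Hgs. Qed.
Lemma opDr a b c al : op a al (b + c) = op a al b + op a al c.
Proof. by case: Hgs. Qed.
Lemma opA a b c al be : op a al (op b be c) = op (op a al b) be c.
Proof. by case: Hgs. Qed.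
Lemma op0l x al : op 0 al x = 0.
Proof. by case: Hgs => _ _ _ _ /(_ x al x) []. Qed.
Lemma op0r x al : op x al 0 = 0.
Proof. by case: Hgs => _ _ _ _ /(_ x al x) []. Qed.
Lemma op0g x y : op x 0 y = 0.
Proof. by case: Hgs => _ _ _ _ /(_ x 0 y) []. Qed.

Lemma clsD l a b : cls op l (a + b) = cls op l a + cls op l b.
Proof.
rewrite /cls; elim: l => [|p l IH]; first by rewrite !big_nil addr0.
by rewrite !big_cons IH opDr addrACA.
Qed.
Lemma cls0 l : cls op l 0 = 0.
Proof.
rewrite /cls; elim: l => [|p l IH]; first by rewrite !big_nil.
by rewrite !big_cons IH op0r addr0.
Qed.
Lemma clsA l a g t : op (cls op l a) g t = cls op l (op a g t).
Proof.
rewrite /cls; elim: l => [|p l IH]; first by rewrite !big_nil op0l.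
by rewrite !big_cons opDl IH opA.
Qed.
Lemma op_sum (T : Type) (s : seq T) (F : T -> S) x g :
  op x g (\sum_(j <- s) F j) = \sum_(j <- s) op x g (F j).
Proof.
elim: s => [|p s IH]; first by rewrite !big_nil op0r.
by rewrite !big_cons opDr IH.
Qed.
Lemma cls_sum (T : Type) (s : seq T) (F : T -> S) l :
  cls op l (\sum_(j <- s) F j) = \sum_(j <- s) cls op l (F j).
Proof.
elim: s => [|p s IH]; first by rewrite !big_nil cls0.
by rewrite !big_cons clsD IH.
Qed.
Lemma cls_cat l1 l2 a : cls op (l1 ++ l2) a = cls op l1 a + cls op l2 a.
Proof. by rewrite /cls big_cat. Qed.
Lemma cls_lmul l1 l2 a : cls op (lmul op l1 l2) a = cls op l1 (cls op l2 a).
Proof.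
elim: l1 => [|p l1 IH]; first by rewrite /cls /lmul /= !big_nil.
rewrite /lmul /= cls_cat -/(lmul op l1 l2) IH.
rewrite [in RHS]/cls big_cons; congr (_ + _).
rewrite /cls big_map op_sum; apply: eq_bigr => q _ /=; by rewrite opA.
Qed.

Definition inF (f : S -> S) := exists l, f = cls op l.

Lemma inF_Lop f : inF f -> exists l : seq (S * G), l <> [::] /\ f = cls op l.
Proof.
case=> l ->; case: l => [|p l]; last by exists (p :: l).
exists [:: (0, 0)]; split => //; apply: funext => a.
by rewrite /cls big_nil big_seq1 op0l.
Qed.

Definition mk f (H : inF f) : Lop op := exist _ f (inF_Lop H).

Lemma LvalP (p : Lop op) : inF (Lval p).
Proof. destruct p as [f Hf]; rewrite /=; destruct Hf as [l [_ E]]; by exists l. Qed.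

Lemma Lval_inj (p q : Lop op) : Lval p = Lval q -> p = q.
Proof.
move=> E; destruct p as [f Hf], q as [g Hg]; simpl in E; subst g; f_equal; apply: Prop_irrelevance.
Qed.

Lemma inFD f g : inF f -> inF g -> inF (fun a => f a + g a).
Proof. by case=> l1 -> [l2 ->]; exists (l1 ++ l2); apply: funext => a; rewrite cls_cat. Qed.
Lemma inFC f g : inF f -> inF g -> inF (fun a => f (g a)).
Proof. by case=> l1 -> [l2 ->]; exists (lmul op l1 l2); apply: funext => a; rewrite cls_lmul. Qed.
Lemma inF0 : inF (fun _ => 0).
Proof. by exists [::]; apply: funext => a; rewrite /cls big_nil. Qed.
Lemma inFpt x g : inF (fun a => op x g a).
Proof. by exists [:: (x, g)]; apply: funext => a; rewrite /cls big_seq1. Qed.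
Lemma inF_sum (T : Type) (s : seq T) (F : T -> Lop op) :
  inF (fun a => \sum_(j <- s) Lval (F j) a).
Proof.
elim: s => [|p s IH].
  have -> : (fun a => \sum_(j <- [::]) Lval (F j) a) = fun _ => 0.
    by apply: funext => a; rewrite big_nil.
  exact: inF0.
have -> : (fun a => \sum_(j <- p :: s) Lval (F j) a) = fun a => Lval (F p) a + \sum_(j <- s) Lval (F j) a.
  by apply: funext => a; rewrite big_cons.
exact: inFD (LvalP _) IH.
Qed.

Definition Ladd (p q : Lop op) := mk (inFD (LvalP p) (LvalP q)).
Definition Lcomp (p q : Lop op) := mk (inFC (LvalP p) (LvalP q)).
Definition pt x g := mk (inFpt x g).

Lemma LvalD f (H : inF f) a b : f (a + b) = f a + f b.
Proof. by case: H => l ->; exact: clsD. Qed.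
Lemma Lval0 f (H : inF f) : f 0 = 0.
Proof. by case: H => l ->; exact: cls0. Qed.
Lemma LvalA f (H : inF f) a g t : op (f a) g t = f (op a g t).
Proof. by case: H => l ->; exact: clsA. Qed.
Lemma Lval_sum f (H : inF f) (T : Type) (s : seq T) (F : T -> S) :
  f (\sum_(j <- s) F j) = \sum_(j <- s) f (F j).
Proof. by case: H => l ->; exact: cls_sum. Qed.

Lemma Ladd_relP (p q z : Lop op) : Ladd_rel p q z <-> (forall a, Lval z a = Lval p a + Lval q a).
Proof.
split.
  by case=> lp [lq [-> [-> ->]]] a; rewrite cls_cat.
move=> E; case: (LvalP p) => lp Ep; case: (LvalP q) => lq Eq.
exists lp, lq; split=> //; split=> //; apply: funext => a.
by rewrite E cls_cat Ep Eq.
Qed.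

Lemma Lmul_relP (p q z : Lop op) : Lmul_rel p q z <-> (forall a, Lval z a = Lval p (Lval q a)).
Proof.
split.
  by case=> lp [lq [-> [-> ->]]] a; rewrite cls_lmul.
move=> E; case: (LvalP p) => lp Ep; case: (LvalP q) => lq Eq.
exists lp, lq; split=> //; split=> //; apply: funext => a.
by rewrite E cls_lmul Ep Eq.
Qed.

Lemma LzeroE a : Lval (Lzero op) a = 0.
Proof. by rewrite /= /cls big_seq1 op0l. Qed.

End Infra.


Section BM.
Variable R : realType.

Lemma bm_ge (T : eqType) (s : seq T) (F : T -> R) c :
  c <= 1 -> (forall j, j \in s -> c <= F j) -> c <= \big[Num.min/1]_(j <- s) F j.
Proof.
move=> c1; elim: s => [|p s IH] cF; first by rewrite big_nil.
rewrite big_cons le_min cF ?mem_head //= IH // => j js; apply: cF.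
by rewrite inE js orbT.
Qed.

Lemma bm_le (T : eqType) (s : seq T) (F : T -> R) j :
  j \in s -> \big[Num.min/1]_(j <- s) F j <= F j.
Proof.
elim: s => [//|p s IH]; rewrite inE big_cons ge_min => /orP[/eqP->|js].
  by rewrite lexx.
by rewrite IH ?orbT.
Qed.

Lemma bm_le1 (T : Type) (s : seq T) (F : T -> R) :
  \big[Num.min/1]_(j <- s) F j <= 1.
Proof.
case: s => [|p s]; first by rewrite big_nil.
by rewrite big_cons ge_min; apply/orP; right; elim: s {p} => [|p s IH];
  rewrite ?big_nil ?big_cons ?ge_min ?IH ?orbT.
Qed.

Lemma bm_mono (T : Type) (s : seq T) (F H : T -> R) :
  (forall j, F j <= H j) -> \big[Num.min/1]_(j <- s) F j <= \big[Num.min/1]_(j <- s) H j.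
Proof.
move=> FH; elim: s => [|p s IH]; first by rewrite !big_nil.
by rewrite !big_cons le_min2.
Qed.

Lemma min_sup2 (X Y : set R) c : X !=set0 -> Y !=set0 ->
  (forall a b, X a -> Y b -> Num.min a b <= c) -> Num.min (sup X) (sup Y) <= c.
Proof.
move=> X0 Y0 H; rewrite leNgt; apply/negP; rewrite lt_min => /andP[cX cY].
have [a Xa ca] := sup_gt X0 cX; have [b Yb cb] := sup_gt Y0 cY.
by have := H a b Xa Yb; rewrite leNgt lt_min ca cb.
Qed.

End BM.

Section Fz.
Variables (R : realType) (S G : nmodType) (op : S -> G -> S -> S).
Hypothesis Hgs : gamma_semiring_with_zero op.

Lemma sum_S (T : Type) (s : seq T) (F : T -> S) (sigma : S -> R) :
  sigma 0 = 1 -> (forall x y, Num.min (sigma x) (sigma y) <= sigma (x + y)) ->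
  \big[Num.min/1]_(j <- s) sigma (F j) <= sigma (\sum_(j <- s) F j).
Proof.
move=> s0 sD; elim: s => [|p s IH]; first by rewrite !big_nil s0.
rewrite !big_cons; apply: le_trans (sD _ _); exact: le_min2.
Qed.

Lemma sum_L (T : Type) (s : seq T) (F : T -> Lop op) (mu : Lop op -> R) :
  mu (Lzero op) = 1 -> (forall x y z, Ladd_rel x y z -> Num.min (mu x) (mu y) <= mu z) ->
  forall z, (forall a, Lval z a = \sum_(j <- s) Lval (F j) a) ->
  \big[Num.min/1]_(j <- s) mu (F j) <= mu z.
Proof.
move=> m0 mD; elim: s => [|p s IH] z Ez.
  rewrite big_nil (_ : z = Lzero op) ?m0 //; apply: Lval_inj.
  by apply: funext => a; rewrite Ez big_nil (LzeroE Hgs).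
rewrite big_cons.
pose z' := mk Hgs (inF_sum s F).
apply: le_trans (mD (F p) z' z _).
  by apply: le_min2 => //; apply: IH.
by apply/Ladd_relP => a; rewrite Ez big_cons.
Qed.

Lemma fuzzy_01 (T : Type) (mu : T -> R) x : fuzzy mu -> 0 <= mu x /\ mu x <= 1.
Proof. by move=> /(_ x) /andP. Qed.

Lemma pp_lb (sigma : S -> R) (p : Lop op) s : fuzzy sigma ->
  plus_prime op sigma p <= sigma (Lval p s).
Proof.
move=> fs; apply: ge_inf; last by exists s.
by exists 0 => _ [t _ <-]; case: (fuzzy_01 (Lval p t) fs).
Qed.

Lemma pp_ge (sigma : S -> R) (p : Lop op) c :
  (forall s, c <= sigma (Lval p s)) -> c <= plus_prime op sigma p.
Proof.
move=> H; apply: lb_le_inf; first by exists (sigma (Lval p 0)), 0.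
by move=> _ [t _ <-].
Qed.

Lemma pp_fuzzy (sigma : S -> R) : fuzzy sigma -> fuzzy (plus_prime op sigma).
Proof.
move=> fs p; apply/andP; split.
  by apply: pp_ge => s; case: (fuzzy_01 (Lval p s) fs).
by apply: le_trans (pp_lb p 0 fs) _; case: (fuzzy_01 (Lval p 0) fs).
Qed.

End Fz.


Section Main.
Variables (R : realType) (S G : nmodType) (op : S -> G -> S -> S).
Hypothesis Hgs : gamma_semiring_with_zero op.
Variable rl : seq (G * S).
Hypothesis Hrl : forall a, \sum_(p <- rl) op a p.1 p.2 = a.
Variable ll : seq (S * G).
Hypothesis Hll : forall a, cls op ll a = a.

Local Notation pt := (pt Hgs).
Local Notation pp := (plus_prime op).

Lemma ptE x g a : Lval (pt x g) a = op x g a.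
Proof. by []. Qed.

Lemma opsumL (T : Type) (s : seq T) (F : T -> S) g t :
  op (\sum_(j <- s) F j) g t = \sum_(j <- s) op (F j) g t.
Proof.
elim: s => [|p s IH]; first by rewrite !big_nil (op0l Hgs).
by rewrite !big_cons (opDl Hgs) IH.
Qed.

Definition sig_of (mu : Lop op -> R) (x : S) : R :=
  \big[Num.min/1]_(j <- rl) mu (pt x j.1).

Lemma R1 (mu : Lop op -> R) : Lfuzzy_right_ideal mu -> forall y d, sig_of mu y <= mu (pt y d).
Proof.
case=> fm _ m0 mD mM y d.
pose F j := Lcomp Hgs (pt y j.1) (pt j.2 d).
apply: le_trans (sum_L Hgs (s:=rl) (F:=F) m0 mD _).
  by apply: bm_mono => j; apply: (mM _ (pt j.2 d)); apply/(Lmul_relP Hgs).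
move=> a; rewrite ptE -[in LHS](Hrl y) opsumL; apply: eq_bigr => j _.
by rewrite -(opA Hgs).
Qed.

Lemma pt0 g : pt 0 g = Lzero op.
Proof. by apply: Lval_inj; apply: funext => a; rewrite ptE (LzeroE Hgs) (op0l Hgs). Qed.

Lemma R_fuzzy (mu : Lop op -> R) : fuzzy mu -> fuzzy (sig_of mu).
Proof.
move=> fm x; apply/andP; split; last exact: bm_le1.
by apply: bm_ge => // j _; case: (fuzzy_01 (pt x j.1) fm).
Qed.

Lemma R0 (mu : Lop op -> R) : mu (Lzero op) = 1 -> sig_of mu 0 = 1.
Proof.
move=> m0; apply/le_anti; rewrite bm_le1 /=.
by apply: bm_ge => // j _; rewrite pt0 m0.
Qed.

Lemma R_add (mu : Lop op -> R) : Lfuzzy_right_ideal mu ->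
  forall x y, Num.min (sig_of mu x) (sig_of mu y) <= sig_of mu (x + y).
Proof.
move=> H; case: (H) => fm _ m0 mD mM x y.
apply: bm_ge; first by rewrite ge_min bm_le1.
move=> j js; apply: le_trans (mD (pt x j.1) (pt y j.1) _ _).
  by apply: le_min2; apply: bm_le.
by apply/Ladd_relP => a; rewrite !ptE (opDl Hgs).
Qed.

Lemma ptM x g y j : Lmul_rel (pt x g) (pt y j) (pt (op x g y) j).
Proof. by apply/(Lmul_relP Hgs) => a; rewrite !ptE (opA Hgs). Qed.

Lemma R_right (mu : Lop op -> R) : Lfuzzy_right_ideal mu -> fuzzy_right_ideal op (sig_of mu).
Proof.
move=> H; case: (H) => fm _ m0 mD mM; split.
- exact: R_fuzzy.
- by exists 0; rewrite R0 //; apply/eqP; rewrite oner_neq0.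
- exact: R0.
- exact: R_add.
- move=> x g y; apply: bm_ge; first exact: bm_le1.
  move=> j _; apply: le_trans (R1 H x g) _; exact: mM (ptM x g y j.1).
Qed.

Lemma R_left (mu : Lop op -> R) : Lfuzzy_right_ideal mu -> Lfuzzy_left_ideal mu ->
  fuzzy_left_ideal op (sig_of mu).
Proof.
move=> H [fm _ m0 mD mM]; split.
- exact: R_fuzzy.
- by exists 0; rewrite R0 //; apply/eqP; rewrite oner_neq0.
- exact: R0.
- exact: R_add.
- move=> x g y; apply: bm_ge; first exact: bm_le1.
  move=> j js; apply: le_trans (bm_le _ js) _; exact: mM (ptM x g y j.1).
Qed.

Lemma R_pp (mu : Lop op -> R) : Lfuzzy_right_ideal mu -> pp (sig_of mu) = mu.
Proof.
move=> H; case: (H) => fm _ m0 mD mM; apply: funext => p; apply/le_anti/andP; split.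
  apply: le_trans _ (sum_L Hgs (s:=ll) (F:= fun k => pt (Lval p k.1) k.2) m0 mD _).
    apply: bm_ge.
      by case/andP: (pp_fuzzy (R_fuzzy fm) p).
    move=> k _; apply: le_trans (pp_lb _ k.1 (R_fuzzy fm)) _; exact: R1.
  move=> a; rewrite -[in LHS](Hll a) /cls (Lval_sum Hgs (LvalP p)).
  by apply: eq_bigr => k _; rewrite ptE (LvalA Hgs (LvalP p)).
apply: pp_ge => s; apply: bm_ge; first by case: (fuzzy_01 p fm).
move=> j _; apply: (mM p (pt s j.1)); apply/(Lmul_relP Hgs) => a.
by rewrite !ptE (LvalA Hgs (LvalP p)).
Qed.

Lemma ppZ (sigma : S -> R) : fuzzy sigma -> sigma 0 = 1 -> pp sigma (Lzero op) = 1.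
Proof.
move=> fs s0; apply/le_anti/andP; split.
  by apply: le_trans (pp_lb _ 0 fs) _; rewrite (LzeroE Hgs) s0.
by apply: pp_ge => s; rewrite (LzeroE Hgs) s0.
Qed.

Lemma ppD (sigma : S -> R) : fuzzy sigma -> (forall x y, Num.min (sigma x) (sigma y) <= sigma (x + y)) ->
  forall x y z, Ladd_rel x y z -> Num.min (pp sigma x) (pp sigma y) <= pp sigma z.
Proof.
move=> fs sD x y z /Ladd_relP E; apply: pp_ge => s; rewrite E.
by apply: le_trans (sD _ _); apply: le_min2; apply: pp_lb.
Qed.

Lemma P1 (sigma : S -> R) : fuzzy_right_ideal op sigma -> Lfuzzy_right_ideal (pp sigma).
Proof.
move=> H; case: (H) => fs _ s0 sD sM; split.
- exact: pp_fuzzy.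
- by exists (Lzero op); rewrite ppZ //; apply/eqP; rewrite oner_neq0.
- exact: ppZ.
- exact: ppD.
- move=> p q r /(Lmul_relP Hgs) E; apply: pp_ge => s; rewrite E; exact: pp_lb.
Qed.

Lemma left_F (sigma : S -> R) f : fuzzy_left_ideal op sigma -> inF op f -> forall y, sigma y <= sigma (f y).
Proof.
case=> fs _ s0 sD sM [l ->] y.
apply: le_trans (sum_S l (fun q => op q.1 q.2 y) s0 sD).
apply: bm_ge; first by case: (fuzzy_01 y fs).
by move=> q _; apply: sM.
Qed.

Lemma P1L (sigma : S -> R) : fuzzy_left_ideal op sigma -> Lfuzzy_left_ideal (pp sigma).
Proof.
move=> H; case: (H) => fs _ s0 sD sM; split.
- exact: pp_fuzzy.
- by exists (Lzero op); rewrite ppZ //; apply/eqP; rewrite oner_neq0.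
- exact: ppZ.
- exact: ppD.
- move=> p q r /(Lmul_relP Hgs) E; apply: pp_ge => s; rewrite E.
  apply: le_trans (pp_lb _ s fs) _; exact: left_F H (LvalP p) _.
Qed.

End Main.


Section Main2.
Variables (R : realType) (S G : nmodType) (op : S -> G -> S -> S).
Hypothesis Hgs : gamma_semiring_with_zero op.
Variable rl : seq (G * S).
Hypothesis Hrl : forall a, \sum_(p <- rl) op a p.1 p.2 = a.

Local Notation pt := (pt Hgs).
Local Notation pp := (plus_prime op).

Lemma P2 (sigma : S -> R) : fuzzy_right_ideal op sigma ->
  forall x, sigma x = \big[Num.min/1]_(j <- rl) pp sigma (pt x j.1).
Proof.
case=> fs _ s0 sD sM x; apply/le_anti/andP; split.
  apply: bm_ge; first by case: (fuzzy_01 x fs).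
  by move=> j _; apply: pp_ge => s; rewrite ptE.
apply: (le_trans (y := \big[Num.min/1]_(j <- rl) sigma (op x j.1 j.2))).
  by apply: bm_mono => j; apply: (pp_lb (pt x j.1) j.2 fs).
by rewrite -{2}(Hrl x); apply: sum_S.
Qed.

Lemma pp_mono (sigma tau : S -> R) : fuzzy sigma ->
  fincl sigma tau -> fincl (pp sigma) (pp tau).
Proof. by move=> fs st p; apply: pp_ge => s; apply: le_trans (pp_lb p s fs) (st _). Qed.

Lemma incl_iff (sigma tau : S -> R) : fuzzy_right_ideal op sigma -> fuzzy_right_ideal op tau ->
  (fincl sigma tau <-> fincl (pp sigma) (pp tau)).
Proof.
move=> Hs Ht; split; first by case: Hs => fs *; exact: pp_mono.
by move=> H x; rewrite (P2 Hs) (P2 Ht); apply: bm_mono => j; apply: H.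
Qed.

Lemma pp_inj (sigma tau : S -> R) : fuzzy_right_ideal op sigma -> fuzzy_right_ideal op tau ->
  pp sigma = pp tau -> sigma = tau.
Proof. by move=> Hs Ht E; apply: funext => x; rewrite (P2 Hs) (P2 Ht) E. Qed.

Lemma fcap_fuzzy (sigma tau : S -> R) : fuzzy sigma -> fuzzy tau -> fuzzy (fcap sigma tau).
Proof.
move=> fs ft x; case: (fuzzy_01 x fs) => a b; case: (fuzzy_01 x ft) => c d.
by rewrite /fcap le_min a c ge_min b.
Qed.

Lemma fcap_right (sigma tau : S -> R) : fuzzy_right_ideal op sigma -> fuzzy_right_ideal op tau ->
  fuzzy_right_ideal op (fcap sigma tau).
Proof.
case=> fs _ s0 sD sM [ft _ t0 tD tM]; split.
- exact: fcap_fuzzy.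
- by exists 0; rewrite /fcap s0 t0 minxx; apply/eqP; rewrite oner_neq0.
- by rewrite /fcap s0 t0 minxx.
- by move=> x y; rewrite /fcap minACA; apply: le_min2.
- by move=> x g y; apply: le_min2.
Qed.

Lemma fcap_left (sigma tau : S -> R) : fuzzy_left_ideal op sigma -> fuzzy_left_ideal op tau ->
  fuzzy_left_ideal op (fcap sigma tau).
Proof.
case=> fs _ s0 sD sM [ft _ t0 tD tM]; split.
- exact: fcap_fuzzy.
- by exists 0; rewrite /fcap s0 t0 minxx; apply/eqP; rewrite oner_neq0.
- by rewrite /fcap s0 t0 minxx.
- by move=> x y; rewrite /fcap minACA; apply: le_min2.
- by move=> x g y; apply: le_min2.
Qed.

Lemma pp_fcap (sigma tau : S -> R) : fuzzy sigma -> fuzzy tau ->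
  pp (fcap sigma tau) = fcap (pp sigma) (pp tau).
Proof.
move=> fs ft; apply: funext => p; apply/le_anti/andP; split.
  rewrite /fcap le_min; apply/andP; split; apply: pp_ge => s;
  apply: le_trans (pp_lb p s (fcap_fuzzy fs ft)) _; rewrite /fcap ge_min lexx ?orbT //.
by apply: pp_ge => s; apply: le_min2; apply: pp_lb.
Qed.

Lemma fsum_ge (sigma tau : S -> R) x u v : fuzzy sigma -> x = u + v ->
  Num.min (sigma u) (tau v) <= fsum sigma tau x.
Proof.
move=> fs E; apply: ub_le_sup; last by exists u, v.
exists 1 => _ [u' [v' [_ ->]]]; rewrite ge_min; case: (fuzzy_01 u' fs) => _ ->.
by [].
Qed.

Lemma fsum_le (sigma tau : S -> R) x c :
  (forall u v, x = u + v -> Num.min (sigma u) (tau v) <= c) -> fsum sigma tau x <= c.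
Proof.
move=> H; apply: ge_sup; first by exists (Num.min (sigma x) (tau 0)), x, 0; rewrite addr0.
by move=> _ [u [v [E ->]]]; apply: H.
Qed.

Lemma fsum_common (sigma tau : S -> R) : fuzzy sigma -> fuzzy tau ->
  sigma 0 = 1 -> tau 0 = 1 ->
  (forall x y, Num.min (sigma x) (sigma y) <= sigma (x + y)) ->
  (forall x y, Num.min (tau x) (tau y) <= tau (x + y)) ->
  [/\ fuzzy (fsum sigma tau), (exists x, fsum sigma tau x <> 0), fsum sigma tau 0 = 1
    & (forall x y, Num.min (fsum sigma tau x) (fsum sigma tau y) <= fsum sigma tau (x + y))].
Proof.
move=> fs ft s0 t0 sD tD.
have f0 : fsum sigma tau 0 = 1.
  apply/le_anti/andP; split.
    by apply: fsum_le => u v _; rewrite ge_min; case: (fuzzy_01 u fs) => _ ->.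
  by rewrite -{1}(minxx 1) -{1}s0 -t0; apply: fsum_ge => //; rewrite addr0.
split => //.
- move=> x; apply/andP; split.
    apply: le_trans (fsum_ge tau fs (esym (addr0 x))).
    by case: (fuzzy_01 x fs) => a _; case: (fuzzy_01 0 ft) => b _; rewrite le_min a b.
  by apply: fsum_le => u v _; rewrite ge_min; case: (fuzzy_01 u fs) => _ ->.
- by exists 0; rewrite f0; apply/eqP; rewrite oner_neq0.
- move=> x y; apply: min_sup2.
  + by exists (Num.min (sigma x) (tau 0)), x, 0; rewrite addr0.
  + by exists (Num.min (sigma y) (tau 0)), y, 0; rewrite addr0.
  move=> _ _ [u [v [-> ->]]] [u' [v' [-> ->]]].
  apply: le_trans (fsum_ge tau fs (addrACA u v u' v')).
  by rewrite minACA; apply: le_min2.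
Qed.

Lemma fsum_right (sigma tau : S -> R) : fuzzy_right_ideal op sigma -> fuzzy_right_ideal op tau ->
  fuzzy_right_ideal op (fsum sigma tau).
Proof.
case=> fs _ s0 sD sM [ft _ t0 tD tM].
case: (fsum_common fs ft s0 t0 sD tD) => ? ? ? ?; split => // x g y.
apply: fsum_le => u v E; apply: le_trans (fsum_ge tau fs (_ : op x g y = op u g y + op v g y)).
  by apply: le_min2.
by rewrite E (opDl Hgs).
Qed.

Lemma fsum_left (sigma tau : S -> R) : fuzzy_left_ideal op sigma -> fuzzy_left_ideal op tau ->
  fuzzy_left_ideal op (fsum sigma tau).
Proof.
case=> fs _ s0 sD sM [ft _ t0 tD tM].
case: (fsum_common fs ft s0 t0 sD tD) => ? ? ? ?; split => // x g y.
apply: fsum_le => u v E; apply: le_trans (fsum_ge tau fs (_ : op x g y = op x g u + op x g v)).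
  by apply: le_min2.
by rewrite E (opDr Hgs).
Qed.

Lemma LaddZ (x : Lop op) : Ladd_rel x (Lzero op) x.
Proof. by apply/Ladd_relP => a; rewrite (LzeroE Hgs) addr0. Qed.
Lemma LaddZl (x : Lop op) : Ladd_rel (Lzero op) x x.
Proof. by apply/Ladd_relP => a; rewrite (LzeroE Hgs) add0r. Qed.

Lemma Lfsum_ge (m1 m2 : Lop op -> R) x u v : fuzzy m1 -> Ladd_rel u v x ->
  Num.min (m1 u) (m2 v) <= Lfsum m1 m2 x.
Proof.
move=> fs E; apply: ub_le_sup; last by exists u, v.
exists 1 => _ [u' [v' [_ ->]]]; rewrite ge_min; case: (fuzzy_01 u' fs) => _ ->.
by [].
Qed.

Lemma Lfsum_le (m1 m2 : Lop op -> R) x c :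
  (forall u v, Ladd_rel u v x -> Num.min (m1 u) (m2 v) <= c) -> Lfsum m1 m2 x <= c.
Proof.
move=> H; apply: ge_sup; first by exists (Num.min (m1 x) (m2 (Lzero op))), x, (Lzero op); split => //; exact: LaddZ.
by move=> _ [u [v [E ->]]]; apply: H.
Qed.

Lemma Lfsum_common (m1 m2 : Lop op -> R) : fuzzy m1 -> fuzzy m2 ->
  m1 (Lzero op) = 1 -> m2 (Lzero op) = 1 ->
  (forall x y z, Ladd_rel x y z -> Num.min (m1 x) (m1 y) <= m1 z) ->
  (forall x y z, Ladd_rel x y z -> Num.min (m2 x) (m2 y) <= m2 z) ->
  [/\ fuzzy (Lfsum m1 m2), (exists x, Lfsum m1 m2 x <> 0), Lfsum m1 m2 (Lzero op) = 1
    & (forall x y z, Ladd_rel x y z -> Num.min (Lfsum m1 m2 x) (Lfsum m1 m2 y) <= Lfsum m1 m2 z)].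
Proof.
move=> fs ft s0 t0 sD tD.
have f0 : Lfsum m1 m2 (Lzero op) = 1.
  apply/le_anti/andP; split.
    by apply: Lfsum_le => u v _; rewrite ge_min; case: (fuzzy_01 u fs) => _ ->.
  by rewrite -{1}(minxx 1) -{1}s0 -t0; apply: Lfsum_ge => //; exact: LaddZ.
split => //.
- move=> x; apply/andP; split.
    apply: le_trans (Lfsum_ge m2 fs (LaddZ x)).
    by case: (fuzzy_01 x fs) => a _; case: (fuzzy_01 (Lzero op) ft) => b _; rewrite le_min a b.
  by apply: Lfsum_le => u v _; rewrite ge_min; case: (fuzzy_01 u fs) => _ ->.
- by exists (Lzero op); rewrite f0; apply/eqP; rewrite oner_neq0.
- move=> x y z /Ladd_relP Exyz; apply: min_sup2.
  + by exists (Num.min (m1 x) (m2 (Lzero op))), x, (Lzero op); split => //; exact: LaddZ.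
  + by exists (Num.min (m1 y) (m2 (Lzero op))), y, (Lzero op); split => //; exact: LaddZ.
  move=> _ _ [u [v [/Ladd_relP Ex ->]]] [u' [v' [/Ladd_relP Ey ->]]].
  apply: le_trans (Lfsum_ge m2 fs (_ : Ladd_rel (Ladd Hgs u u') (Ladd Hgs v v') z)).
    rewrite minACA; apply: le_min2; [apply: sD | apply: tD]; apply/Ladd_relP => a //.
  by apply/Ladd_relP => a; rewrite Exyz Ex Ey /= addrACA.
Qed.

Lemma Lfsum_right (m1 m2 : Lop op -> R) : Lfuzzy_right_ideal m1 -> Lfuzzy_right_ideal m2 ->
  Lfuzzy_right_ideal (Lfsum m1 m2).
Proof.
case=> fs _ s0 sD sM [ft _ t0 tD tM].
case: (Lfsum_common fs ft s0 t0 sD tD) => ? ? ? ?; split => // p q r /(Lmul_relP Hgs) E.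
apply: Lfsum_le => u v /Ladd_relP Ep.
apply: le_trans (Lfsum_ge m2 fs (_ : Ladd_rel (Lcomp Hgs u q) (Lcomp Hgs v q) r)).
  apply: le_min2; [apply: sM | apply: tM]; exact/(Lmul_relP Hgs).
by apply/Ladd_relP => a; rewrite E Ep.
Qed.

Lemma Lfsum_left (m1 m2 : Lop op -> R) : Lfuzzy_left_ideal m1 -> Lfuzzy_left_ideal m2 ->
  Lfuzzy_left_ideal (Lfsum m1 m2).
Proof.
case=> fs _ s0 sD sM [ft _ t0 tD tM].
case: (Lfsum_common fs ft s0 t0 sD tD) => ? ? ? ?; split => // p q r /(Lmul_relP Hgs) E.
apply: Lfsum_le => u v /Ladd_relP Ep.
apply: le_trans (Lfsum_ge m2 fs (_ : Ladd_rel (Lcomp Hgs p u) (Lcomp Hgs p v) r)).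
  apply: le_min2; [apply: sM | apply: tM]; exact/(Lmul_relP Hgs).
apply/Ladd_relP => a; rewrite E.
have -> : Lval q a = Lval u a + Lval v a by apply: Ep.
by rewrite (LvalD Hgs (LvalP p)).
Qed.

End Main2.


Section Assemble.
Variables (R : realType) (S G : nmodType) (op : S -> G -> S -> S).
Hypothesis Hgs : gamma_semiring_with_zero op.
Variable rl : seq (G * S).
Hypothesis Hrl : forall a, \sum_(p <- rl) op a p.1 p.2 = a.
Variable ll : seq (S * G).
Hypothesis Hll : forall a, cls op ll a = a.

Local Notation pp := (plus_prime op).

Lemma assemble (PS : (S -> R) -> Prop) (PL : (Lop op -> R) -> Prop)
 (HS : forall s, PS s -> fuzzy_right_ideal op s)
 (HL : forall m, PL m -> Lfuzzy_right_ideal m)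
 (H1 : forall s, PS s -> PL (pp s))
 (H2 : forall m, PL m -> PS (sig_of Hgs rl m))
 (H3 : forall s t, PS s -> PS t -> PS (fsum s t))
 (H4 : forall s t, PS s -> PS t -> PS (fcap s t))
 (H5 : forall m n, PL m -> PL n -> PL (Lfsum m n)) :
 (forall s, PS s -> PL (pp s)) /\ (forall s t, PS s -> PS t -> pp s = pp t -> s = t) /\
 (forall m, PL m -> exists s, PS s /\ pp s = m) /\
 (forall s t, PS s -> PS t -> (fincl s t <-> fincl (pp s) (pp t))) /\
 (forall s t, PS s -> PS t -> [/\ PS (fsum s t), PS (fcap s t),
     pp (fsum s t) = Lfsum (pp s) (pp t) & pp (fcap s t) = fcap (pp s) (pp t)]).
Proof.
split => //; split.
  by move=> s t Ps Pt; apply: (pp_inj Hgs Hrl); apply/HS.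
split.
  move=> m Pm; exists (sig_of Hgs rl m); split; first exact: H2.
  exact: (R_pp Hgs Hrl Hll (HL _ Pm)).
split.
  by move=> s t Ps Pt; apply: (incl_iff Hgs Hrl); apply/HS.
move=> s t Ps Pt; split; [exact: H3 | exact: H4 | | ].
  have [fs _ s0 sD sM] := HS _ Ps; have [ft _ t0 tD tM] := HS _ Pt.
  set B := Lfsum (pp s) (pp t).
  have PB : PL B by apply: H5; apply: H1.
  set rho := sig_of Hgs rl B.
  have Prho : PS rho := H2 _ PB.
  have Erho : pp rho = B := R_pp Hgs Hrl Hll (HL _ PB).
  have [fr _ r0 rD rM] := HS _ Prho.
  have [fsB _ _ _ _] := HL _ PB.
  have [fps _ ps0 _ _] := HL _ (H1 _ Ps); have [fpt _ pt0 _ _] := HL _ (H1 _ Pt).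
  have sr : fincl s rho.
    apply/(incl_iff Hgs Hrl (HS _ Ps) (HS _ Prho)); rewrite Erho => p.
    apply: le_trans (Lfsum_ge _ fps (LaddZ Hgs p)).
    by rewrite pt0 min_l //; case: (fuzzy_01 p fps).
  have tr : fincl t rho.
    apply/(incl_iff Hgs Hrl (HS _ Pt) (HS _ Prho)); rewrite Erho => p.
    apply: le_trans (Lfsum_ge _ fps (LaddZl Hgs p)).
    by rewrite ps0 min_r //; case: (fuzzy_01 p fpt).
  have sumr : fincl (fsum s t) rho.
    move=> x; apply: fsum_le => u v ->; apply: le_trans (rD _ _).
    by apply: le_min2.
  have [ffs _ fs0 fsD fsM] := HS _ (H3 _ _ Ps Pt).
  have [_ _ _ AD _] := HL _ (H1 _ (H3 _ _ Ps Pt)).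
  apply: funext => p; apply/le_anti/andP; split.
    by rewrite -Erho; exact: (pp_mono ffs sumr p).
  apply: (Lfsum_le Hgs) => u v E; apply: le_trans (AD _ _ _ E).
  apply: le_min2; [apply: (pp_mono fs) => x | apply: (pp_mono ft) => x].
    apply: le_trans (fsum_ge t fs (esym (addr0 x))).
    by rewrite t0 min_l //; case: (fuzzy_01 x fs).
  apply: le_trans (fsum_ge t fs (esym (add0r x))).
  by rewrite s0 min_r //; case: (fuzzy_01 x ft).
have [fs _ _ _ _] := HS _ Ps; have [ft _ _ _ _] := HS _ Pt.
exact: pp_fcap.
Qed.

End Assemble.

Unset Implicit Arguments.
Local Close Scope classical_set_scope.

Theorem theorem3p4 (R : realType) (S G : nmodType) (op : S -> G -> S -> S) :
  gamma_semiring_with_zero op -> has_left_unity op -> has_right_unity op ->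
  (* fuzzy ideals *)
  ((forall sigma : S -> R, fuzzy_ideal op sigma -> Lfuzzy_ideal (plus_prime op sigma)) /\
   (forall sigma tau : S -> R, fuzzy_ideal op sigma -> fuzzy_ideal op tau ->
      plus_prime op sigma = plus_prime op tau -> sigma = tau) /\
   (forall mu : Lop op -> R, Lfuzzy_ideal mu ->
      exists sigma : S -> R, fuzzy_ideal op sigma /\ plus_prime op sigma = mu) /\
   (forall sigma tau : S -> R, fuzzy_ideal op sigma -> fuzzy_ideal op tau ->
      (fincl sigma tau <-> fincl (plus_prime op sigma) (plus_prime op tau))) /\
   (forall sigma tau : S -> R, fuzzy_ideal op sigma -> fuzzy_ideal op tau ->
      [/\ fuzzy_ideal op (fsum sigma tau), fuzzy_ideal op (fcap sigma tau),
          plus_prime op (fsum sigma tau) = Lfsum (plus_prime op sigma) (plus_prime op tau)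
        & plus_prime op (fcap sigma tau) = fcap (plus_prime op sigma) (plus_prime op tau)])) /\
  (* fuzzy right ideals *)
  ((forall sigma : S -> R, fuzzy_right_ideal op sigma ->
      Lfuzzy_right_ideal (plus_prime op sigma)) /\
   (forall sigma tau : S -> R, fuzzy_right_ideal op sigma -> fuzzy_right_ideal op tau ->
      plus_prime op sigma = plus_prime op tau -> sigma = tau) /\
   (forall mu : Lop op -> R, Lfuzzy_right_ideal mu ->
      exists sigma : S -> R, fuzzy_right_ideal op sigma /\ plus_prime op sigma = mu) /\
   (forall sigma tau : S -> R, fuzzy_right_ideal op sigma -> fuzzy_right_ideal op tau ->
      (fincl sigma tau <-> fincl (plus_prime op sigma) (plus_prime op tau))) /\
   (forall sigma tau : S -> R, fuzzy_right_ideal op sigma -> fuzzy_right_ideal op tau ->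
      [/\ fuzzy_right_ideal op (fsum sigma tau), fuzzy_right_ideal op (fcap sigma tau),
          plus_prime op (fsum sigma tau) = Lfsum (plus_prime op sigma) (plus_prime op tau)
        & plus_prime op (fcap sigma tau) = fcap (plus_prime op sigma) (plus_prime op tau)])).
Proof.
move=> Hgs [ll [_ Hll]] [rl Hrl]; split.
  apply: (@assemble R S G op Hgs rl Hrl ll Hll (@fuzzy_ideal S G op R) (@Lfuzzy_ideal S G op R)).
  - by move=> s [].
  - by move=> m [].
  - by move=> s [Hr Hl]; split; [apply: P1 | apply: P1L].
  - by move=> m [Hr Hl]; split; [apply: R_right | apply: R_left].
  - by move=> s t [? ?] [? ?]; split; [apply: fsum_right | apply: fsum_left].
  - by move=> s t [? ?] [? ?]; split; [apply: fcap_right | apply: fcap_left].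
  - by move=> m n [? ?] [? ?]; split; [apply: Lfsum_right | apply: Lfsum_left].
apply: (@assemble R S G op Hgs rl Hrl ll Hll (@fuzzy_right_ideal S G op R) (@Lfuzzy_right_ideal S G op R)).
- by [].
- by [].
- by move=> s ?; apply: P1.
- by move=> m ?; apply: R_right.
- by move=> s t ? ?; apply: fsum_right.
- by move=> s t ? ?; apply: fcap_right.
- by move=> m n ? ?; apply: Lfsum_right.
Qed.
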